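(* Assume $n=\sum_l c_l$, let $\pi'$ maximize $\sum_i g_{\pi_i}(x_i)$ over $\Pi_{\mathbf x,\mathbf y,\mathbf l}$, and let $\mathbf g'$ be as defined from an optimal dual solution $(\hat{\mathbf u},\hat{\mathbf v})$ ($g'_l(x_i)=\hat u_i+\hat v_l$ if $\pi'_i=l$, else $g_l(x_i)$). Then $\|\mathbf g'-\mathbf g\|_1\le\|\mathbf g''-\mathbf g\|_1$ for every $\pi''\in\Pi_{\mathbf x,\mathbf y,\mathbf l}$ and every $\mathbf g''$ with $\pi''\in\hat\Pi(\mathbf g'')$; that is, $\mathbf g'$ is a minimal modification of $\mathbf g$ under which some counterfactually harmless assignment maximizes predicted utility.
   Context: Setup: a pool $\mathcal I$ of $n$ refugees with features $\mathbf x=(x_i)$, realized placements $\mathbf l=(l_i)\in\mathcal L^n$ and outcomes $\mathbf y\in\{0,1\}^n$; finite location set $\mathcal L$ with capacities $c_l$; predicted probabilities $\mathbf g=(g_l(x_i))\in[0,1]^{\mathcal I\times\mathcal L}$. An assignment is a map $\pi:\mathcal I\to\mathcal L$ with $|\{i:\pi_i=l\}|\le c_l$. For a weight matrix $\mathbf h$, $\hat\Pi(\mathbf h)$ is the set of assignments maximizing $\sum_i h_{\pi_i}(x_i)$. $\Pi_{\mathbf x,\mathbf y,\mathbf l}$ is the set of assignments with $\pi_i=l_i$ whenever $y_i=1$. The dual linear program is $\min \sum_i u_i+\sum_l c_lv_l$ s.t. $u_i+v_l\ge g_l(x_i)$ for all $i,l$, $u_i,v_l\ge0$. $\|\cdot\|_1$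 is the entrywise $\ell_1$ norm. *)

(* Defs.v *)
From mathcomp Require Import all_boot all_order all_algebra.
Set Implicit Arguments. Unset Strict Implicit. Unset Printing Implicit Defensive.
Import Order.TTheory GRing.Theory Num.Theory.
Local Open Scope ring_scope.

Section Defs.
Variables (R : realFieldType) (I L : finType).

Definition is_assignment (c : L -> nat) (pi : I -> L) : Prop :=
  forall l : L, (#|[pred i | pi i == l]| <= c l)%N.

(* Total (predicted) utility of pi under weight matrix h (h i l = h_l(x_i)). *)
Definition utility (h : I -> L -> R) (pi : I -> L) : R :=
  \sum_(i : I) h i (pi i).

Definition opt_assignment (c : L -> nat) (h : I -> L -> R) (pi : I -> L) : Prop :=
  is_assignment c pi /\
  forall sigma : I -> L, is_assignment c sigma -> utility h sigma <= utility h pi.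

Definition harmless (c : L -> nat) (y : I -> bool) (lr : I -> L) (pi : I -> L) : Prop :=
  is_assignment c pi /\ forall i : I, y i -> pi i = lr i.

Definition dual_feasible (h : I -> L -> R) (u : I -> R) (v : L -> R) : Prop :=
  (forall i l, h i l <= u i + v l) /\ (forall i, 0 <= u i) /\ (forall l, 0 <= v l).

Definition dual_obj (c : L -> nat) (u : I -> R) (v : L -> R) : R :=
  \sum_(i : I) u i + \sum_(l : L) (c l)%:R * v l.

Definition dual_optimal (c : L -> nat) (h : I -> L -> R) (u : I -> R) (v : L -> R) : Prop :=
  dual_feasible h u v /\
  forall u2 v2, dual_feasible h u2 v2 -> dual_obj c u v <= dual_obj c u2 v2.

Definition l1dist (h k : I -> L -> R) : R :=
  \sum_(i : I) \sum_(l : L) `|h i l - k i l|.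

Definition modified (h : I -> L -> R) (pi : I -> L) (u : I -> R) (v : L -> R)
  : I -> L -> R :=
  fun i l => if pi i == l then u i + v l else h i l.

End Defs.

(* Main.v *)
Require Import Defs.
From mathcomp Require Import zify ring lra.
From mathcomp Require Import all_boot all_order all_algebra.
Import Order.TTheory GRing.Theory Num.Theory.

Section Match.
Variables (I L : finType) (t : I -> L -> bool).

Definition load (p : I -> option L) (l : L) : nat := \sum_j (p j == Some l).

Fixpoint reach (p : I -> option L) (k : nat) : {set I} :=
  if k is k'.+1 then
    reach p k' :|: [set j | [exists j', (j' \in reach p k') &&
                       (if p j is Some l then t j' l else false)]]
  else [set j | p j == None].

Definition tightp (p : I -> option L) := forall j l, p j = Some l -> t j l.

Lemma reach_swap (p : I -> option L) : tightp p -> forall k i, i \in reach p k ->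
  exists q : I -> option L, [/\ tightp q, (forall l, load q l = load p l),
     q i = None & forall j, j \notin reach p k -> q j = p j].
Proof.
move=> tp; elim=> [|k IH] i /=.
  rewrite inE => /eqP pi; exists p; split=> //.
case/setUP; first move=> /IH [q [tq lq qi qa]].
  exists q; split=> // j; rewrite in_setU negb_or => /andP[+ _]; exact: qa.
rewrite inE => /existsP [j' /andP [j'R]].
case pE: (p i) => [l|//] tjl.
case: (boolP (i \in reach p k)) => iR.
  have [q [tq lq qi qa]] := IH i iR.
  exists q; split=> // j; rewrite in_setU negb_or => /andP[+ _]; exact: qa.
have [q [tq lq qj' qa]] := IH j' j'R.
have qi : q i = Some l by rewrite qa.
have nij : j' != i by apply: contraNneq iR => <-.
exists (fun j => if j == j' then Some l else if j == i then None else q j); split.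
- move=> j l'; case: eqP => [-> [<-]//|_]; case: eqP => // _; exact: tq.
- move=> l'; rewrite -lq /load (bigD1 j') //= [in RHS](bigD1 j') //=.
  rewrite (bigD1 i) 1?eq_sym //= [in RHS](bigD1 i) 1?eq_sym //=.
  rewrite eqxx [i == j']eq_sym (negbTE nij) eqxx qj' qi !addnA.
  congr (_ + _); first by case: (Some l == Some l').
  apply: eq_bigr => j /andP [nj nj']; by rewrite (negbTE nj) (negbTE nj').
- by rewrite eq_sym (negbTE nij) eqxx.
- move=> j; rewrite in_setU negb_or => /andP [jR jN].
  have nj' : j != j' by apply: contraNneq jR => ->.
  have nji : j != i.
    apply: contraNneq jN => ->; rewrite inE; apply/existsP; exists j'.
    by rewrite j'R pE.
  by rewrite (negbTE nj') (negbTE nji) qa.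
Qed.

Lemma card_ind (A : {pred I}) : #|A| = \sum_j (j \in A : nat).
Proof. by rewrite -sum1_card big_mkcond; apply: eq_bigr => j _; case: (j \in A). Qed.

Lemma reach_mono p k : reach p k \subset reach p k.+1.
Proof. exact: subsetUl. Qed.

Lemma reach0 p k : [set j | p j == None] \subset reach p k.
Proof.
elim: k => [//|k IH]; exact: subset_trans IH (reach_mono p k).
Qed.

Lemma reach_stab p : exists K, reach p K = reach p K.+1.
Proof.
suff H : forall k, (exists K, reach p K = reach p K.+1) \/ (k <= #|reach p k|)%N.
  case: (H #|I|.+1) => // /leq_trans /(_ (max_card _)); by rewrite ltnn.
elim=> [|k [H|IH]]; [by right | by left |].
case: (eqVneq (reach p k) (reach p k.+1)) => [e|ne]; first by left; exists k.
right; apply: leq_ltn_trans IH _; apply: proper_card.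
by rewrite properEneq ne reach_mono.
Qed.

Variable c : L -> nat.

Definition valid (p : {ffun I -> option L}) : bool :=
  [forall j, [forall l, (p j == Some l) ==> t j l]] && [forall l, (load p l <= c l)%N].

Definition msize (p : I -> option L) : nat := \sum_l load p l.

Lemma hall_or :
  (exists pi : I -> L, (forall i, t i (pi i)) /\ forall l, (#|[pred i | pi i == l]| <= c l)%N)
  \/ (exists S : {set I}, (\sum_(l | [exists i in S, t i l]) c l < #|S|)%N).
Proof.
pose p0 : {ffun I -> option L} := [ffun _ => None].
have vp0 : valid p0.
  apply/andP; split; first by apply/forallP=> j; apply/forallP => l; rewrite ffunE.
  apply/forallP => l; by rewrite /load big1 // => j _; rewrite ffunE.
case: (arg_maxnP (fun q : {ffun I -> option L} => msize q) vp0) => p vp pmax.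
have [/forallP tp /forallP cp] := andP vp.
have tp' : tightp p.
  move=> j l pj; move: (tp j) => /forallP /(_ l); by rewrite pj eqxx.
case: (boolP [forall j, p j != None]) => [/forallP allm | ].
  left.
  have [pi hpi] : exists pi : I -> L, forall i, p i = Some (pi i).
    apply: (@fin_all_exists I (fun _ => L) (fun i l => p i = Some l)) => i; move: (allm i); case: (p i) => [l _|//]; by exists l.
  exists pi; split; first by move=> i; apply: tp'; exact: hpi.
  move=> l; apply: leq_trans (cp l); rewrite card_ind /load; apply: eq_leq.
  by apply: eq_bigr => j _; rewrite inE hpi.
rewrite negb_forall => /existsP [j0]; rewrite negbK => /eqP pj0.
right.
have [K eK] := reach_stab p.
pose S := reach p K; exists S.
have j0S : j0 \in S by apply: (subsetP (reach0 p K)); rewrite inE pj0.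
have closed : forall i l j, i \in S -> t i l -> p j = Some l -> j \in S.
  move=> i l j iS til pj; rewrite /S eK /= in_setU; apply/orP; right.
  rewrite inE; apply/existsP; exists i; by rewrite iS pj.
have full : forall i l, i \in S -> t i l -> load p l = c l.
  move=> i l iS til; apply/eqP; rewrite eqn_leq cp /=; rewrite leqNgt; apply/negP => lt.
  have [q [tq lq qi qa]] := @reach_swap p tp' K i iS.
  pose q' : {ffun I -> option L} := [ffun j => if j == i then Some l else q j].
  have lq' : forall l', load q' l' = (load p l' + (l' == l))%N.
    move=> l'; rewrite -lq /load (bigD1 i) //= [in RHS](bigD1 i) //= ffunE eqxx qi.
    have -> : (Some l == Some l') = (l' == l) by rewrite eq_sym; case: eqP => [[->]|ne]; [rewrite eqxx | case: eqP => // e; case: ne; rewrite e].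
    rewrite add0n addnC; congr (_ + _).
    apply: eq_bigr => j nj; by rewrite ffunE (negbTE nj).
  have vq' : valid q'.
    apply/andP; split.
      apply/forallP=> j; apply/forallP => l'; rewrite ffunE; case: (eqVneq j i) => [->|_].
        by apply/implyP => /eqP [<-].
      apply/implyP => /eqP; exact: tq.
    apply/forallP => l'; rewrite lq'; case: (eqVneq l' l) => [->|_]; last by rewrite addn0 cp.
    by rewrite addn1.
  have := pmax q' vq'; rewrite /msize (eq_bigr _ (fun l' _ => lq' l')) big_split /=.
  have -> : (\sum_l' ((l' == l) : nat))%N = 1%N.
    by rewrite (bigD1 l) //= eqxx big1 // => l' /negbTE ->.
  by rewrite addn1 ltnn.
rewrite card_ind.
have -> : (\sum_(l | [exists i in S, t i l]) c l =
    \sum_j \sum_(l | [exists i in S, t i l]) (p j == Some l))%N.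
  rewrite exchange_big /=; apply: eq_bigr => l /existsP [i /andP [iS til]].
  by rewrite -(full i l iS til).
rewrite (bigD1 j0) //= [X in (_ <= X)%N](bigD1 j0) //= j0S pj0 big1 // add0n.
rewrite add1n ltnS; apply: leq_sum => j _.
case pj: (p j) => [l|]; last by rewrite big1.
case: (boolP [exists i in S, t i l]) => [hl|hl].
  rewrite (bigD1 l) //= eqxx big1 ?addn0; last by move=> l' /andP [_ ne]; case: eqP => // [[e]]; rewrite e eqxx in ne.
  have /existsP [i /andP [iS til]] := hl.
  by rewrite (closed i l j iS til pj).
rewrite big1 // => l' hl'; case: eqP => // [[e]]; by move: hl; rewrite e hl'.
Qed.
End Match.

Local Open Scope ring_scope.
Set Implicit Arguments. Unset Strict Implicit.

Lemma sum_comp (R : realFieldType)(I L : finType)(pi : I -> L)(f : L -> R):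
 \sum_i f (pi i) = \sum_l (#|[pred i | pi i == l]|)%:R * f l.
Proof.
rewrite (partition_big pi xpredT) //=; apply: eq_bigr => l _.
rewrite (eq_bigr (fun _ => f l)); last by move=> i /eqP ->.
by rewrite sumr_const mulr_natl.
Qed.

Lemma sum_loads (I L : finType)(pi : I -> L) :
  (\sum_l #|[pred i | pi i == l]| = #|I|)%N.
Proof.
rewrite -sum1_card (partition_big pi xpredT) //=; apply: eq_bigr => l _.
by rewrite sum1_card.
Qed.

Lemma sum_eq_le (L : finType) (a b : L -> nat) :
  (forall l, a l <= b l)%N -> (\sum_l a l = \sum_l b l)%N -> forall l, a l = b l.
Proof.
move=> hle hs l; apply/eqP; rewrite eqn_leq hle /= leqNgt; apply/negP => lt.
move: hs; rewrite (bigD1 l) //= [in RHS](bigD1 l) //=.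
have := @leq_sum _ (index_enum L) (fun l' => l' != l) a b (fun l' _ => hle l'); lia.
Qed.

Definition posr (R : realFieldType) (z : R) : R := if 0 < z then z else 1.

Arguments posr {R} z.

Lemma posr_gt0 (R : realFieldType) (z : R) : 0 < posr z.
Proof. by rewrite /posr; case: ifP. Qed.

Lemma posr_id (R : realFieldType) (z : R) : 0 < z -> posr z = z.
Proof. by rewrite /posr => ->. Qed.

Lemma bigmin_le (R : realFieldType) (T : finType) (F : T -> R) t :
  \big[Num.min/1]_(s : T) F s <= F t.
Proof. by rewrite (bigD1 t) //= ge_min lexx. Qed.

Lemma bigmin_gt0 (R : realFieldType) (T : finType) (F : T -> R) :
  (forall t, 0 < F t) -> 0 < \big[Num.min/1]_(s : T) F s.
Proof.
move=> h; elim/big_rec: _ => [//|t x _ hx]; by rewrite lt_min h hx.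
Qed.

Lemma sum_indR (R : realFieldType) (T : finType) (P : pred T) (w : T -> nat) (e : R) :
  \sum_t (w t)%:R * ((P t : nat)%:R * e) = (\sum_(t | P t) w t)%:R * e.
Proof.
rewrite natr_sum mulr_suml [RHS]big_mkcond; apply: eq_bigr => t _.
by case: (P t) => /=; rewrite ?mul1r ?mul0r ?mulr0.
Qed.

Lemma sum_indR1 (R : realFieldType) (T : finType) (P : pred T) (e : R) :
  \sum_t (P t : nat)%:R * e = (\sum_(t | P t) 1)%:R * e.
Proof.
rewrite -(@sum_indR R T P (fun=> 1%N)); apply: eq_bigr => t _; by rewrite mul1r.
Qed.

Lemma dual_attain (R : realFieldType) (I L : finType) (g : I -> L -> R) (c : L -> nat)
  (g0 : forall i l, 0 <= g i l) (hn : #|I| = (\sum_l c l)%N) u v :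
  dual_optimal c g u v -> exists pi, is_assignment c pi /\ dual_obj c u v <= utility g pi.
Proof.
move=> [[feas [u0 v0]] opt].
pose t i l := u i + v l == g i l.
case: (@hall_or I L t c) => [[pi [tpi cpi]] | [S hS]].
  exists pi; split => //.
  have eqc : forall l, #|[pred i | pi i == l]| = c l.
    apply: sum_eq_le => //; by rewrite sum_loads hn.
  rewrite /utility (eq_bigr _ (fun i _ => esym (eqP (tpi i)))).
  rewrite big_split /= (sum_comp pi v) /dual_obj le_eqVlt; apply/orP; left; apply/eqP.
  congr (_ + _); apply: eq_bigr => l _; by rewrite eqc.
exfalso.
pose NS l := [exists i in S, t i l].
pose m1 := \big[Num.min/1]_(i : I) posr (u i).
pose m2 := \big[Num.min/1]_(l : L) posr (v l).
pose m3 := \big[Num.min/1]_(i : I) \big[Num.min/1]_(l : L) posr (u i + v l - g i l).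
pose e := Num.min m1 (Num.min m2 m3).
have e0 : 0 < e.
  rewrite !lt_min !bigmin_gt0 // => *; rewrite ?bigmin_gt0 // => *; exact: posr_gt0.
have eu : forall i, 0 < u i -> e <= u i.
  move=> i ui; rewrite -(posr_id ui); apply: le_trans (bigmin_le (fun i => posr (u i)) i).
  by rewrite /e !ge_min lexx.
have ev : forall l, 0 < v l -> e <= v l.
  move=> l vl; rewrite -(posr_id vl); apply: le_trans (bigmin_le (fun l => posr (v l)) l).
  by rewrite /e !ge_min lexx ?orbT.
have es : forall i l, ~~ t i l -> e <= u i + v l - g i l.
  move=> i l nt.
  have sl : 0 < u i + v l - g i l.
    by rewrite subr_gt0 lt_def feas andbT; exact: nt.
  rewrite -(posr_id sl); apply: le_trans (bigmin_le (fun l => posr (u i + v l - g i l)) l).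
  apply: le_trans (bigmin_le (fun i => \big[Num.min/1]_(l : L) posr (u i + v l - g i l)) i).
  by rewrite /e !ge_min lexx ?orbT.
have tNS : forall i l, i \in S -> t i l -> NS l.
  by move=> i l iS til; apply/existsP; exists i; rewrite iS til.
have hC : (\sum_(l | NS l) c l)%:R < #|S|%:R :> R by rewrite ltr_nat.
case: (boolP [forall i in S, 0 < u i]) => [/forall_inP upos | ].
  pose u2 i := u i - (i \in S : nat)%:R * e.
  pose v2 l := v l + (NS l : nat)%:R * e.
  have f2 : dual_feasible g u2 v2.
    split; [|split].
    - move=> i l; rewrite /u2 /v2; case iS: (i \in S); case nl: (NS l) => /=;
        rewrite ?mul1r ?mul0r ?subr0 ?addr0; have := feas i l; have := e0.
      + lra.
      + have nt : ~~ t i l by apply: contraFN nl; exact: tNS.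
        have := es i l nt; lra.
      + lra.
      + lra.
    - move=> i; rewrite /u2; case iS: (i \in S) => /=; rewrite ?mul1r ?mul0r ?subr0 //.
      by rewrite subr_ge0 eu // upos.
    - move=> l; rewrite /v2; have := v0 l; have := e0; case: (NS l) => /=;
        rewrite ?mul1r ?mul0r ?addr0 //; lra.
  have := opt u2 v2 f2; rewrite /dual_obj /u2 /v2 sumrB.
  have -> : \sum_l (c l)%:R * (v l + (NS l : nat)%:R * e) =
      \sum_l (c l)%:R * v l + (\sum_(l | NS l) c l)%:R * e.
    by rewrite -sum_indR -big_split; apply: eq_bigr => l _; rewrite mulrDr.
  rewrite sum_indR1 sum1_card.
  have : (\sum_(l | NS l) c l)%:R * e < #|S|%:R * e by rewrite ltr_pM2r.
  lra.
rewrite negb_forall_in => /existsP [i0 /andP [i0S]].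
rewrite -leNgt => ui0.
have ui00 : u i0 = 0 by apply/eqP; rewrite eq_le ui0 u0.
have vpos : forall l, ~~ NS l -> 0 < v l.
  move=> l nl; rewrite lt_def v0 andbT; apply/negP => /eqP vl.
  move/negP: nl; apply; apply: (tNS i0) => //; rewrite /t ui00 vl add0r eq_le g0 andTb.
  by have := feas i0 l; rewrite ui00 vl add0r.
pose u2 i := u i + (i \notin S : nat)%:R * e.
pose v2 l := v l - (~~ NS l : nat)%:R * e.
have f2 : dual_feasible g u2 v2.
  split; [|split].
  - move=> i l; rewrite /u2 /v2; case iS: (i \in S); case nl: (NS l) => /=;
      rewrite ?mul1r ?mul0r ?subr0 ?addr0; have := feas i l; have := e0.
    + lra.
    + have nt : ~~ t i l by apply: contraFN nl; exact: tNS.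
      have := es i l nt; lra.
    + lra.
    + lra.
  - move=> i; rewrite /u2; have := u0 i; have := e0; case: (i \in S) => /=;
      rewrite ?mul1r ?mul0r ?addr0 //; lra.
  - move=> l; rewrite /v2; case nl: (NS l) => /=; rewrite ?mul1r ?mul0r ?subr0 //.
    by rewrite subr_ge0 ev // vpos // nl.
have := opt u2 v2 f2; rewrite /dual_obj /u2 /v2 big_split /=.
have -> : \sum_l (c l)%:R * (v l - (~~ NS l : nat)%:R * e) =
    \sum_l (c l)%:R * v l - (\sum_(l | ~~ NS l) c l)%:R * e.
  by rewrite -sum_indR -sumrB; apply: eq_bigr => l _; rewrite mulrBr.
rewrite sum_indR1.
have hcS : (\sum_(i | i \notin S) 1 + #|S| = #|I|)%N.
  rewrite -(cardsC S) addnC; congr (_ + _); rewrite -sum1_card; apply: eq_bigl => i.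
  by rewrite inE.
have hcL : (\sum_(l | ~~ NS l) c l + \sum_(l | NS l) c l = \sum_l c l)%N.
  by rewrite [in RHS](bigID NS) /= addnC.
have hS' : (\sum_(l | NS l) c l < #|S|)%N := hS.
have hnat : (\sum_(i | i \notin S) 1 < \sum_(l | ~~ NS l) c l)%N by lia.
have : (\sum_(i | i \notin S) 1)%:R * e < (\sum_(l | ~~ NS l) c l)%:R * e
  by rewrite ltr_pM2r // ltr_nat.
lra.
Qed.

Lemma row_bound (R : realFieldType) (L : finType) (f : L -> R) (a b : L) :
  - f a + f b <= \sum_l `|f l|.
Proof.
have ge0 : forall P, 0 <= \sum_(l | P l) `|f l| by move=> P; apply: sumr_ge0 => *.
case: (eqVneq a b) => [<-|nab]; first by rewrite addNr; exact: (ge0 xpredT).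
rewrite (bigD1 a) //= (bigD1 b) /=; last by rewrite eq_sym.
have h1 : - f a <= `|f a| by rewrite -normrN ler_norm.
have h2 : f b <= `|f b| by rewrite ler_norm.
have := ge0 (fun l => (l != a) && (l != b)); lra.
Qed.

Theorem mainTheorem7 (R : realFieldType) (I L : finType) (X : Type) (x : I -> X)
  (lr : I -> L) (y : I -> bool) (c : L -> nat) (gf : L -> X -> R)
  (hg01 : forall i l, 0 <= gf l (x i) <= 1)
  (hn : #|I| = (\sum_(l : L) c l)%N)
  (pi' : I -> L)
  (hpi'1 : harmless c y lr pi')
  (hpi'2 : forall sigma, harmless c y lr sigma ->
             utility (fun i l => gf l (x i)) sigma <= utility (fun i l => gf l (x i)) pi')
  (u : I -> R) (v : L -> R)
  (huv : dual_optimal c (fun i l => gf l (x i)) u v) :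
  forall (pi'' : I -> L) (g'' : I -> L -> R),
    harmless c y lr pi'' -> opt_assignment c g'' pi'' ->
    l1dist (modified (fun i l => gf l (x i)) pi' u v) (fun i l => gf l (x i))
      <= l1dist g'' (fun i l => gf l (x i)).
Proof.
move=> pi'' g'' hh [asg'' opt''].
set g := (fun i l => gf l (x i)) in hpi'2 huv *.
have g0 : forall i l, 0 <= g i l by move=> i l; case/andP: (hg01 i l).
have [ps [asps hps]] := dual_attain g0 hn huv.
have [[feas [u0 v0]] _] := huv.
have [asg' _] := hpi'1.
have lhs : l1dist (modified g pi' u v) g = \sum_i u i + \sum_i v (pi' i) - utility g pi'.
  rewrite /l1dist /utility -big_split /= -sumrB; apply: eq_bigr => i _.
  rewrite (bigD1 (pi' i)) //= big1 /modified ?eqxx.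
    by rewrite addr0 ger0_norm // subr_ge0 feas.
  by move=> l nl; rewrite eq_sym (negbTE nl) subrr normr0.
have vb : \sum_i v (pi' i) <= \sum_l (c l)%:R * v l.
  rewrite sum_comp; apply: ler_sum => l _; apply: ler_wpM2r => //.
  by rewrite ler_nat; exact: asg'.
have rhs : utility g ps - utility g'' ps + utility g'' pi'' - utility g pi''
           <= l1dist g'' g.
  rewrite /utility /l1dist -sumrB -addrA -sumrB -big_split /=; apply: ler_sum => i _.
  have := row_bound (fun l => g'' i l - g i l) (ps i) (pi'' i); lra.
have := opt'' ps asps; have := hpi'2 pi'' hh.
move: hps; rewrite /dual_obj lhs; lra.
Qed.
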